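(* Let $S_0=\{x\in\mathbb{C}:0<{\rm Im}(x)<\pi\}$. Then for all $x,y\in S_0$, $$s_{S_0}(x,y)\le{\rm th}(\rho_{S_0}(x,y)/2)\le(\pi/2)\,s_{S_0}(x,y),$$ and this inequality is sharp.
   Context: For a domain $G\subsetneq\mathbb{C}$, $s_G(x,y)=\frac{|x-y|}{\inf_{z\in\partial G}(|x-z|+|z-y|)}$. The hyperbolic metric of $\mathbb{H}^2=\{z:{\rm Im}\,z>0\}$ satisfies ${\rm th}(\rho_{\mathbb{H}^2}(u,v)/2)=|u-v|/|u-\overline{v}|$, and $\rho_{S_0}(x,y)=\rho_{\mathbb{H}^2}(e^x,e^y)$ ($z\mapsto e^z$ maps $S_0$ conformally onto $\mathbb{H}^2$). *)

(* Defs.v *)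
From Stdlib Require Import Reals.
From Coquelicot Require Import Coquelicot.
Open Scope R_scope.

Definition cexp (z : C) : C := (exp (fst z) * cos (snd z), exp (fst z) * sin (snd z)).

Definition th (t : R) : R := (exp t - exp (- t)) / (exp t + exp (- t)).
Definition artanh (r : R) : R := ln ((1 + r) / (1 - r)) / 2.

Definition cboundary (G : C -> Prop) (z : C) : Prop :=
  forall eps : R, 0 < eps ->
    (exists w, Cmod (w - z) < eps /\ G w) /\ (exists w, Cmod (w - z) < eps /\ ~ G w).

Definition s_metric (G : C -> Prop) (x y : C) : R :=
  Cmod (x - y) /
  real (Glb_Rbar (fun t => exists z, cboundary G z /\ t = Cmod (x - z) + Cmod (z - y))).

(* upper half-plane and its hyperbolic metric:
   th(rho_H(u,v)/2) = |u-v|/|u - conj v| *)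
Definition rho_H (u v : C) : R := 2 * artanh (Cmod (u - v) / Cmod (u - Cconj v)).

(* the strip S_0 = {0 < Im x < pi} and its hyperbolic metric via z |-> e^z *)
Definition S0 (x : C) : Prop := 0 < snd x < PI.
Definition rho_S0 (x y : C) : R := rho_H (cexp x) (cexp y).

(* Main.v *)
From Stdlib Require Import Reals Lra Psatz.
From Coquelicot Require Import Coquelicot.
Require Import Defs.
Open Scope R_scope.

Lemma mono (f df : R -> R) a b : a <= b ->
  (forall x, a <= x <= b -> is_derive f x (df x)) ->
  (forall x, a <= x <= b -> 0 <= df x) -> f a <= f b.
Proof.
intros Hab Hd Hp. destruct (Req_dec a b) as [->|Hne]; [lra|].
destruct (MVT_cor2 f df a b) as [c [Hc1 Hc2]]; [lra| |].
- intros c Hc. apply is_derive_Reals. apply Hd. lra.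
- assert (0 <= df c) by (apply Hp; lra). nra.
Qed.

Definition sh u := (exp u - exp (-u)) / 2.
Definition ch u := (exp u + exp (-u)) / 2.

Ltac fin := solve [lra | (field_simplify; reflexivity) | (unfold Rdiv; ring_simplify; reflexivity)].

Lemma sh_ge0 u : 0 <= u -> 0 <= sh u.
Proof. intros. unfold sh. assert (exp (-u) <= exp u).
 { destruct (Req_dec u 0). subst. rewrite Ropp_0. lra. left. apply exp_increasing. lra. } lra. Qed.

Lemma sh0 : sh 0 = 0.
Proof. unfold sh. rewrite Ropp_0. lra. Qed.
Lemma ch0 : ch 0 = 1.
Proof. unfold ch. rewrite Ropp_0, exp_0. lra. Qed.

Lemma H_ge0 u : 0 <= u -> sh u <= u * ch u.
Proof. intros Hu.
 assert (0 * ch 0 - sh 0 <= u * ch u - sh u).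
 { apply (mono (fun u => u * ch u - sh u) (fun u => u * sh u)); auto.
   - intros x _. unfold sh, ch. auto_derive; [auto| fin].
   - intros x Hx. pose proof (sh_ge0 x). nra. }
 rewrite sh0 in H. lra. Qed.

Lemma G2_ge0 u : 0 <= u -> 0 <= 10 - 10 * ch u + u^2 * ch u + 4 * u * sh u.
Proof. intros Hu.
 assert (10 - 10 * ch 0 + 0^2 * ch 0 + 4 * 0 * sh 0 <= 10 - 10 * ch u + u^2 * ch u + 4 * u * sh u).
 { apply (mono (fun u => 10 - 10 * ch u + u^2 * ch u + 4 * u * sh u)
      (fun u => -6 * sh u + 6 * u * ch u + u^2 * sh u)); auto.
   - intros x _. unfold sh, ch. auto_derive; [auto| fin].
   - intros x Hx. pose proof (sh_ge0 x). pose proof (H_ge0 x). nra. }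
 rewrite sh0, ch0 in H. lra. Qed.

Lemma G1_ge0 u : 0 <= u -> 0 <= 12 * u - sh u * (12 - u^2) + 2 * u * (ch u - 1).
Proof. intros Hu.
 assert (12 * 0 - sh 0 * (12 - 0^2) + 2 * 0 * (ch 0 - 1) <= 12 * u - sh u * (12 - u^2) + 2 * u * (ch u - 1)).
 { apply (mono (fun u => 12 * u - sh u * (12 - u^2) + 2 * u * (ch u - 1))
      (fun u => 10 - 10 * ch u + u^2 * ch u + 4 * u * sh u)); auto.
   - intros x _. unfold sh, ch. auto_derive; [auto| fin].
   - intros x Hx. apply G2_ge0; lra. }
 rewrite sh0, ch0 in H. lra. Qed.

Lemma G_ge0 u : 0 <= u -> (ch u - 1) * (12 - u^2) <= 6 * u^2.
Proof. intros Hu.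
 assert (6 * 0^2 - (ch 0 - 1) * (12 - 0^2) <= 6 * u^2 - (ch u - 1) * (12 - u^2)).
 { apply (mono (fun u => 6 * u^2 - (ch u - 1) * (12 - u^2))
      (fun u => 12 * u - sh u * (12 - u^2) + 2 * u * (ch u - 1))); auto.
   - intros x _. unfold sh, ch. auto_derive; [auto| fin].
   - intros x Hx. apply G1_ge0; lra. }
 rewrite ch0 in H. lra. Qed.

Lemma sh_ge_x u : 0 <= u -> u <= sh u.
Proof. intros Hu.
 assert (sh 0 - 0 <= sh u - u).
 { apply (mono (fun u => sh u - u) (fun u => ch u - 1)); auto.
   - intros x _. unfold sh, ch. auto_derive; [auto| fin].
   - intros x Hx. unfold ch. rewrite exp_Ropp. pose proof (exp_pos x).
     replace ((exp x + / exp x) / 2 - 1) with ((exp x - 1)^2 / (2 * exp x)) by (field; lra).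
     apply Rdiv_le_0_compat; [apply pow2_ge_0|lra]. }
 rewrite sh0 in H. lra. Qed.

Lemma F3 x y : 0 <= x <= y -> x^2 - sin x ^2 <= y^2 - sin y ^2.
Proof. intros Hxy.
 apply (mono (fun z => z^2 - sin z ^2) (fun z => 2 * z - 2 * sin z * cos z)); [lra| |].
 - intros z _. auto_derive; [auto| fin].
 - intros z Hz. replace (2 * sin z * cos z) with (sin (2 * z)) by (rewrite sin_2a; ring).
   destruct (Req_dec z 0). subst. rewrite Rmult_0_r, sin_0. lra.
   pose proof (sin_lt_x (2 * z)). lra. Qed.

Lemma P_ge0 y : 0 <= y <= PI -> y * cos y <= sin y.
Proof. intros Hy.
 assert (sin 0 - 0 * cos 0 <= sin y - y * cos y).
 { apply (mono (fun z => sin z - z * cos z) (fun z => z * sin z)); [lra| |].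
   - intros z _. auto_derive; [auto| fin].
   - intros z Hz. pose proof (sin_ge_0 z). nra. }
 rewrite sin_0 in H. lra. Qed.

Lemma Q x y : 0 < x -> x <= y -> y <= PI -> x * sin y <= y * sin x.
Proof. intros Hx Hxy Hy.
 assert (- sin x / x <= - sin y / y).
 { apply (mono (fun z => - sin z / z) (fun z => (sin z - z * cos z) / z^2)); [lra| |].
   - intros z Hz. auto_derive; [lra| field; lra].
   - intros z Hz. apply Rdiv_le_0_compat. pose proof (P_ge0 z). lra. nra. }
 apply Rmult_le_reg_r with (/ (x * y)). apply Rinv_0_lt_compat; nra.
 replace (x * sin y * / (x * y)) with (sin y / y) by (field; lra).
 replace (y * sin x * / (x * y)) with (sin x / x) by (field; lra).
 lra. Qed.

Lemma sin_abs2 a : sin (Rabs a) ^ 2 = sin a ^ 2.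
Proof. unfold Rabs; destruct (Rcase_abs a); [rewrite sin_neg|]; ring. Qed.
Lemma sh_neg a : sh (- a) = - sh a.
Proof. unfold sh. rewrite Ropp_involutive. lra. Qed.
Lemma sh_abs2 a : sh (Rabs a) ^ 2 = sh a ^ 2.
Proof. unfold Rabs; destruct (Rcase_abs a); [rewrite sh_neg|]; ring. Qed.
Lemma ch2 v : ch (2 * v) - 1 = 2 * sh v ^ 2.
Proof. unfold ch, sh.
 replace (2 * v) with (v + v) by ring. replace (- (v + v)) with (- v + - v) by ring.
 rewrite !exp_plus. rewrite exp_Ropp. pose proof (exp_pos v). field. lra. Qed.

Lemma PI_gt3 : 3 < PI.
Proof. pose proof PI2_3_2. lra. Qed.

Lemma key D al mu : 0 < mu <= PI/2 -> Rabs al <= mu ->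
  (D^2+al^2)*(sh D^2 + sin mu^2) <= (sh D^2 + sin al^2)*(D^2+mu^2) /\
  (sh D^2 + sin al^2)*(D^2+mu^2) <= (PI^2/4)*((D^2+al^2)*(sh D^2 + sin mu^2)).
Proof. intros Hmu Hal.
 set (S := sh D ^2). set (A := sin al ^2). set (B := sin mu ^2).
 set (d2 := D^2). set (a2 := al^2). set (m2 := mu^2).
 assert (HS1 : d2 <= S).
 { unfold S, d2. rewrite <- sh_abs2, <- pow2_abs with (x := D).
   pose proof (sh_ge_x (Rabs D) (Rabs_pos D)). pose proof (Rabs_pos D). nra. }
 assert (HS2 : 3 * (S - d2) <= d2 * S).
 { pose proof (G_ge0 (2 * Rabs D)) as G. rewrite ch2, sh_abs2 in G.
   assert (Rabs D ^2 = d2) by (unfold d2; apply pow2_abs).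
   fold S in G. pose proof (Rabs_pos D). nra. }
 assert (Ha2 : a2 <= m2).
 { unfold a2, m2. rewrite <- pow2_abs with (x := al). pose proof (Rabs_pos al). nra. }
 assert (HF3 : B - A <= m2 - a2).
 { unfold A, B, m2, a2. rewrite <- (sin_abs2 al), <- pow2_abs with (x := al).
   pose proof (Rabs_pos al). assert (Rabs al ^ 2 - sin (Rabs al) ^ 2 <= mu ^ 2 - sin mu ^ 2) by (apply F3; lra). lra. }
 assert (HsinA : 0 <= sin (Rabs al) <= Rabs al).
 { split. apply sin_ge_0; pose proof (Rabs_pos al); lra.
   destruct (Req_dec (Rabs al) 0) as [E|E]. rewrite E, sin_0; lra.
   pose proof (sin_lt_x (Rabs al)). pose proof (Rabs_pos al). lra. }
 assert (HsinB : 0 <= sin mu). { apply sin_ge_0; lra. }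
 assert (HF4 : a2 * B <= m2 * A).
 { unfold a2, B, m2, A. rewrite <- (sin_abs2 al), <- pow2_abs with (x := al).
   destruct (Req_dec (Rabs al) 0) as [E|E]. rewrite E. simpl. pose proof (pow2_ge_0 (sin 0)). nra.
   pose proof (Q (Rabs al) mu). pose proof (Rabs_pos al).
   assert (Rabs al * sin mu <= mu * sin (Rabs al)) by (apply H; lra).
   assert (0 <= Rabs al * sin mu) by nra. nra. }
 assert (HF5 : A <= a2).
 { unfold A, a2. rewrite <- (sin_abs2 al), <- pow2_abs with (x := al). nra. }
 assert (HF6 : m2 <= (PI^2/4) * B).
 { pose proof (Q mu (PI/2)) as H. rewrite sin_PI2 in H.
   assert (mu * 1 <= PI / 2 * sin mu) by (apply H; lra; pose proof PI_RGT_0; lra).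
   unfold m2, B. nra. }
 pose proof PI_gt3 as HPI.
 assert (Hd2 : 0 <= d2) by apply pow2_ge_0.
 assert (Ha20 : 0 <= a2) by apply pow2_ge_0.
 assert (HA0 : 0 <= A) by apply pow2_ge_0.
 assert (Hm2k : m2 <= PI^2/4) by (unfold m2; nra).
 split.
 - assert (L1 : d2 * (B - A) <= d2 * (m2 - a2)) by (apply Rmult_le_compat_l; lra).
   assert (L2 : d2 * (m2 - a2) <= S * (m2 - a2)) by (apply Rmult_le_compat_r; lra).
   clearbody S A B d2 a2 m2. clear -L1 L2 HF4. nra.
 - set (k := PI^2/4) in *.
   assert (Hk : 9/4 <= k) by (unfold k; nra).
   clearbody S A B d2 a2 m2 k.
   assert (HS0 : 0 <= S) by lra.
   assert (E1 : (S + A) * (d2 + m2) <= (S + a2) * (d2 + m2)) by (apply Rmult_le_compat_r; lra).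
   assert (E2 : (d2 + a2) * m2 <= (d2 + a2) * (k * B)) by (apply Rmult_le_compat_l; lra).
   assert (E3a : a2 * d2 <= a2 * S) by (apply Rmult_le_compat_l; lra).
   assert (E3b : 0 <= a2 * S) by (apply Rmult_le_pos; lra).
   assert (E3 : a2 * d2 <= k * a2 * S) by nra.
   assert (E4 : m2 * (S - d2) <= k * (S - d2)) by (apply Rmult_le_compat_r; lra).
   assert (E5a : 0 <= d2 * S) by (apply Rmult_le_pos; lra).
   assert (E5 : k * (S - d2) <= (k - 1) * d2 * S) by nra.
   clear -E1 E2 E3 E4 E5. nra.
Qed.
Lemma tri u1 u2 v1 v2 : sqrt ((u1+v1)^2 + (u2+v2)^2) <= sqrt (u1^2+u2^2) + sqrt (v1^2+v2^2).
Proof. pose proof (Cmod_triangle (u1,u2) (v1,v2)). unfold Cmod in H. simpl in H. exact H. Qed.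

Lemma scale l u v : 0 <= l -> sqrt ((l*u)^2 + (l*v)^2) = l * sqrt (u^2+v^2).
Proof. intros Hl. replace ((l*u)^2 + (l*v)^2) with (l^2 * (u^2+v^2)) by ring.
 rewrite sqrt_mult_alt by nra. rewrite sqrt_pow2 by lra. reflexivity. Qed.

Lemma bnd_not_in z : cboundary S0 z -> snd z <= 0 \/ PI <= snd z.
Proof. intros Hb. destruct (Rle_dec (snd z) 0) as [|H1]; [now left|].
 destruct (Rle_dec PI (snd z)) as [|H2]; [now right|]. exfalso.
 destruct (Hb (Rmin (snd z) (PI - snd z))) as [_ [w [Hw Hnw]]].
 { apply Rmin_case; lra. }
 apply Hnw. pose proof (Rmax_Cmod (w - z)%C) as Hm.
 assert (Habs : Rabs (snd w - snd z) < Rmin (snd z) (PI - snd z)).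
 { eapply Rle_lt_trans; [|exact Hw]. eapply Rle_trans; [|exact Hm].
   simpl. replace (snd w + - snd z) with (snd w - snd z) by ring. apply Rmax_r. }
 pose proof (Rmin_l (snd z) (PI - snd z)). pose proof (Rmin_r (snd z) (PI - snd z)).
 unfold S0. apply Rabs_def2 in Habs. lra. Qed.

Lemma Cmod_pair a b c d : Cmod ((a,b) - (c,d)) = sqrt ((a-c)^2 + (b-d)^2).
Proof. reflexivity. Qed.

Lemma bnd_line p q : (q = 0 \/ q = PI) -> cboundary S0 (p, q).
Proof. intros Hq eps He. pose proof PI_RGT_0.
 set (h := Rmin (eps/2) (PI/2)).
 assert (0 < h <= eps/2 /\ h <= PI/2).
 { unfold h. split; [split|]. apply Rmin_case; lra. apply Rmin_l. apply Rmin_r. }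
 destruct Hq as [->| ->].
 - split.
   + exists (p, h). rewrite Cmod_pair. replace ((p-p)^2 + (h-0)^2) with (h^2) by ring.
     rewrite sqrt_pow2 by lra. split. lra. unfold S0; simpl; lra.
   + exists (p, - h). rewrite Cmod_pair. replace ((p-p)^2 + (-h-0)^2) with (h^2) by ring.
     rewrite sqrt_pow2 by lra. split. lra. unfold S0; simpl; lra.
 - split.
   + exists (p, PI - h). rewrite Cmod_pair. replace ((p-p)^2 + (PI - h-PI)^2) with (h^2) by ring.
     rewrite sqrt_pow2 by lra. split. lra. unfold S0; simpl; lra.
   + exists (p, PI + h). rewrite Cmod_pair. replace ((p-p)^2 + (PI + h-PI)^2) with (h^2) by ring.
     rewrite sqrt_pow2 by lra. split. lra. unfold S0; simpl; lra.
Qed.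

Lemma glb_S0 a s b t : 0 < s < PI -> 0 < t < PI ->
  real (Glb_Rbar (fun e => exists z, cboundary S0 z /\ e = Cmod ((a,s) - z) + Cmod (z - (b,t))))
  = Rmin (sqrt ((a-b)^2 + (s+t)^2)) (sqrt ((a-b)^2 + (2*PI-s-t)^2)).
Proof. intros Hs Ht.
 set (m1 := sqrt ((a-b)^2 + (s+t)^2)). set (m2 := sqrt ((a-b)^2 + (2*PI-s-t)^2)).
 set (E := fun e => exists z, cboundary S0 z /\ e = Cmod ((a,s) - z) + Cmod (z - (b,t))).
 assert (E1 : E m1).
 { set (l := s / (s+t)). exists (a + l * (b - a), 0). split. apply bnd_line; auto.
   rewrite !Cmod_pair.
   assert (0 <= l <= 1). { unfold l. split. apply Rdiv_le_0_compat; lra.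
     apply Rmult_le_reg_r with (s+t). lra. field_simplify; lra. }
   replace (a - (a + l * (b - a))) with (l * (a - b)) by ring.
   replace (s - 0) with (l * (s + t)) by (unfold l; field; lra).
   replace (a + l * (b - a) - b) with ((1 - l) * (a - b)) by ring.
   replace (0 - t) with ((1 - l) * (-(s + t))) by (unfold l; field; lra).
   rewrite !scale by lra. replace ((- (s+t))^2) with ((s+t)^2) by ring. fold m1. ring. }
 assert (E2 : E m2).
 { set (l := (PI - s) / (2*PI-s-t)). exists (a + l * (b - a), PI). split. apply bnd_line; auto.
   rewrite !Cmod_pair.
   assert (0 <= l <= 1). { unfold l. split. apply Rdiv_le_0_compat; lra.
     apply Rmult_le_reg_r with (2*PI-s-t). lra. field_simplify; lra. }
   replace (a - (a + l * (b - a))) with (l * (a - b)) by ring.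
   replace (s - PI) with (l * (-(2*PI-s-t))) by (unfold l; field; lra).
   replace (a + l * (b - a) - b) with ((1 - l) * (a - b)) by ring.
   replace (PI - t) with ((1 - l) * (2*PI-s-t)) by (unfold l; field; lra).
   rewrite !scale by lra. replace ((- (2*PI-s-t))^2) with ((2*PI-s-t)^2) by ring. fold m2. ring. }
 assert (LB : forall e, E e -> Rmin m1 m2 <= e).
 { intros e [[p q] [Hb ->]]. rewrite !Cmod_pair.
   destruct (bnd_not_in _ Hb) as [Hq|Hq]; simpl in Hq.
   - eapply Rle_trans. apply Rmin_l.
     assert (sqrt ((p-b)^2 + (q+t)^2) <= sqrt ((p-b)^2 + (q-t)^2)) by (apply sqrt_le_1_alt; nra).
     pose proof (tri (a-p) (s-q) (p-b) (q+t)).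
     replace (a - p + (p - b)) with (a-b) in H0 by ring.
     replace (s - q + (q + t)) with (s+t) in H0 by ring. fold m1 in H0. lra.
   - eapply Rle_trans. apply Rmin_r.
     assert (sqrt ((p-b)^2 + (q-(2*PI-t))^2) <= sqrt ((p-b)^2 + (q-t)^2)) by (apply sqrt_le_1_alt; nra).
     pose proof (tri (a-p) (s-q) (p-b) (q-(2*PI-t))).
     replace (a - p + (p - b)) with (a-b) in H0 by ring.
     replace ((s - q + (q - (2*PI-t)))^2) with ((2*PI-s-t)^2) in H0 by ring. fold m2 in H0. lra. }
 assert (G : is_glb_Rbar E (Rmin m1 m2)).
 { split.
   - intros e He. simpl. apply LB. exact He.
   - intros l Hl. apply Rmin_case_strong; intros _; apply Hl; assumption. }
 fold E. rewrite (is_glb_Rbar_unique E _ G). reflexivity.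
Qed.
Lemma th_artanh r : 0 <= r < 1 -> th (2 * artanh r / 2) = r.
Proof. intros Hr. replace (2 * artanh r / 2) with (artanh r) by field.
 unfold th, artanh. set (q := (1 + r) / (1 - r)).
 assert (Hq : 0 < q) by (unfold q; apply Rdiv_lt_0_compat; lra).
 set (e := exp (ln q / 2)).
 assert (He : e * e = q).
 { unfold e. rewrite <- exp_plus. replace (ln q / 2 + ln q / 2) with (ln q) by field. apply exp_ln; lra. }
 assert (Hep : 0 < e) by apply exp_pos.
 rewrite exp_Ropp. fold e.
 replace ((e - / e) / (e + / e)) with ((e*e - 1) / (e*e + 1)) by (field; nra).
 rewrite He. unfold q. field. lra. Qed.

Lemma dist_formula E1 E2 cs ss ct st q :
  cs^2 + ss^2 = 1 -> ct^2 + st^2 = 1 -> cs*ct + ss*st = 1 - 2*q ->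
  (E1*cs - E2*ct)^2 + (E1*ss - E2*st)^2 = (E1 - E2)^2 + 4*E1*E2*q.
Proof. intros H1 H2 H3.
 replace ((E1*cs - E2*ct)^2 + (E1*ss - E2*st)^2) with
   (E1^2*(cs^2+ss^2) + E2^2*(ct^2+st^2) - 2*E1*E2*(cs*ct+ss*st)) by ring.
 rewrite H1, H2, H3. ring. Qed.


Lemma exp_diff a b : (exp a - exp b)^2 = 4 * exp a * exp b * sh ((a-b)/2) ^2.
Proof. unfold sh. set (c := (a+b)/2). set (D := (a-b)/2).
 replace a with (c + D) by (unfold c, D; field). replace b with (c + - D) by (unfold c, D; field).
 replace ((c + D - (c + - D))/2) with D by field.
 rewrite !exp_plus. rewrite exp_Ropp. pose proof (exp_pos D). pose proof (exp_pos c).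
 field. lra. Qed.

Lemma sc2 x : sin x ^2 + cos x ^2 = 1.
Proof. pose proof (sin2_cos2 x). unfold Rsqr in H. lra. Qed.
Lemma cs2 x : cos x ^2 + sin x ^2 = 1.
Proof. pose proof (sc2 x). lra. Qed.

Lemma r_num a s b t : Cmod (cexp (a,s) - cexp (b,t)) =
  sqrt (4 * exp a * exp b * (sh ((a-b)/2) ^2 + sin ((s-t)/2) ^2)).
Proof. replace (cexp (a,s) - cexp (b,t))%C with (exp a * cos s - exp b * cos t, exp a * sin s - exp b * sin t)
   by (unfold cexp; apply injective_projections; simpl; lra).
 unfold Cmod. cbn [fst snd]. f_equal.
 rewrite (dist_formula _ _ _ _ _ _ (sin ((s-t)/2) ^2)); try apply cs2.
 - rewrite exp_diff. ring.
 - rewrite <- cos_minus. set (al := (s-t)/2). replace (s - t) with (2 * al) by (unfold al; field). rewrite cos_2a_sin. ring.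
Qed.

Lemma r_den a s b t : Cmod (cexp (a,s) - Cconj (cexp (b,t))) =
  sqrt (4 * exp a * exp b * (sh ((a-b)/2) ^2 + sin ((s+t)/2) ^2)).
Proof. replace (cexp (a,s) - Cconj (cexp (b,t)))%C with (exp a * cos s - exp b * cos t, exp a * sin s - exp b * (- sin t))
   by (unfold cexp, Cconj; apply injective_projections; simpl; lra).
 unfold Cmod. cbn [fst snd]. f_equal.
 rewrite (dist_formula _ _ _ _ _ _ (sin ((s+t)/2) ^2)).
 - rewrite exp_diff. ring.
 - apply cs2.
 - replace ((cos t)^2 + (- sin t)^2) with (cos t ^2 + sin t ^2) by ring. apply cs2.
 - replace (cos s * cos t + sin s * - sin t) with (cos (s + t)) by (rewrite cos_plus; ring).
   set (al := (s+t)/2). replace (s + t) with (2 * al) by (unfold al; field). rewrite cos_2a_sin. ring.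
Qed.

Lemma r_lt1 a s b t : 0 < s < PI -> 0 < t < PI ->
  Cmod (cexp (a,s) - cexp (b,t)) < Cmod (cexp (a,s) - Cconj (cexp (b,t))).
Proof. intros Hs Ht.
 replace (cexp (a,s) - cexp (b,t))%C with (exp a * cos s - exp b * cos t, exp a * sin s - exp b * sin t)
   by (unfold cexp; apply injective_projections; simpl; lra).
 replace (cexp (a,s) - Cconj (cexp (b,t)))%C with (exp a * cos s - exp b * cos t, exp a * sin s + exp b * sin t)
   by (unfold cexp, Cconj; apply injective_projections; simpl; lra).
 unfold Cmod. cbn [fst snd]. apply sqrt_lt_1_alt.
 pose proof (sin_gt_0 s). pose proof (sin_gt_0 t). pose proof (exp_pos a). pose proof (exp_pos b).
 assert (0 < exp a * sin s) by (apply Rmult_lt_0_compat; lra).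
 assert (0 < exp b * sin t) by (apply Rmult_lt_0_compat; lra).
 revert H3 H4. generalize (exp a * cos s - exp b * cos t) (exp a * sin s) (exp b * sin t).
 intros X Y W HY HW. split. pose proof (pow2_ge_0 X). pose proof (pow2_ge_0 (Y-W)). lra. nra. Qed.

Lemma sr_le c X1 Y1 X2 Y2 : 0 <= c -> 0 <= X1 -> 0 < Y1 -> 0 <= X2 -> 0 < Y2 ->
  X1 * Y2 <= c^2 * (X2 * Y1) -> sqrt X1 / sqrt Y1 <= c * (sqrt X2 / sqrt Y2).
Proof. intros Hc H1 H2 H3 H4 H.
 rewrite <- !sqrt_div_alt by lra. rewrite <- (sqrt_pow2 c) at 1 by lra.
 rewrite <- sqrt_mult_alt by nra. apply sqrt_le_1_alt.
 apply Rmult_le_reg_r with (Y1 * Y2). nra.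
 replace (X1 / Y1 * (Y1 * Y2)) with (X1 * Y2) by (field; lra).
 replace (c ^ 2 * (X2 / Y2) * (Y1 * Y2)) with (c^2 * (X2 * Y1)) by (field; lra). lra. Qed.

Lemma sr_lt c X1 Y1 X2 Y2 : 0 <= c -> 0 <= X1 -> 0 < Y1 -> 0 <= X2 -> 0 < Y2 ->
  c^2 * (X1 * Y2) < X2 * Y1 -> c * (sqrt X1 / sqrt Y1) < sqrt X2 / sqrt Y2.
Proof. intros Hc H1 H2 H3 H4 H.
 rewrite <- !sqrt_div_alt by lra. rewrite <- (sqrt_pow2 c) at 1 by lra.
 rewrite <- sqrt_mult_alt by nra. apply sqrt_lt_1_alt. split.
 apply Rmult_le_pos. nra. apply Rdiv_le_0_compat; lra.
 apply Rmult_lt_reg_r with (Y1 * Y2). nra.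
 replace (X2 / Y2 * (Y1 * Y2)) with (X2 * Y1) by (field; lra).
 replace (c ^ 2 * (X1 / Y1) * (Y1 * Y2)) with (c^2 * (X1 * Y2)) by (field; lra). lra. Qed.

Lemma formula a s b t : 0 < s < PI -> 0 < t < PI ->
  let D := (a - b) / 2 in let al := (s - t) / 2 in
  let mu := Rmin ((s+t)/2) (PI - (s+t)/2) in
  let P := 4 * exp a * exp b in
  0 < mu <= PI/2 /\ Rabs al <= mu /\
  th (rho_S0 (a,s) (b,t) / 2) = sqrt (P * (sh D ^2 + sin al ^2)) / sqrt (P * (sh D ^2 + sin mu ^2)) /\
  th (rho_S0 (a,s) (b,t) / 2) < 1 /\
  s_metric S0 (a,s) (b,t) = sqrt (4 * (D^2 + al^2)) / sqrt (4 * (D^2 + mu^2)).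
Proof. intros Hs Ht D al mu P.
 assert (Hth : th (rho_S0 (a,s) (b,t) / 2) =
    Cmod (cexp (a,s) - cexp (b,t)) / Cmod (cexp (a,s) - Cconj (cexp (b,t)))).
 { unfold rho_S0, rho_H. apply th_artanh. pose proof (r_lt1 a s b t Hs Ht).
   pose proof (Cmod_ge_0 (cexp (a,s) - cexp (b,t))). split.
   apply Rdiv_le_0_compat; lra. apply Rmult_lt_reg_r with (Cmod (cexp (a,s) - Cconj (cexp (b,t)))). lra.
   field_simplify; lra. }
 assert (Hsin : sin mu ^2 = sin ((s+t)/2) ^2).
 { unfold mu. apply Rmin_case. reflexivity. rewrite sin_PI_x. reflexivity. }
 split; [|split; [|split; [|split]]].
 - unfold mu. split. apply Rmin_case; lra. apply Rmin_case_strong; lra.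
 - unfold mu, al. apply Rmin_case; apply Rabs_le; lra.
 - rewrite Hth, r_num, r_den, Hsin. reflexivity.
 - rewrite Hth. pose proof (r_lt1 a s b t Hs Ht).
   pose proof (Cmod_ge_0 (cexp (a,s) - cexp (b,t))).
   apply Rmult_lt_reg_r with (Cmod (cexp (a,s) - Cconj (cexp (b,t)))). lra.
   field_simplify; lra.
 - unfold s_metric. rewrite glb_S0 by assumption. rewrite Cmod_pair.
   replace ((a - b)^2 + (s - t)^2) with (4 * (D^2 + al^2)) by (unfold D, al; field).
   f_equal. unfold mu. destruct (Rle_dec ((s+t)/2) (PI - (s+t)/2)) as [Hm|Hm].
   + rewrite (Rmin_left ((s+t)/2)) by lra. rewrite Rmin_left. f_equal. unfold D. field.
     apply sqrt_le_1_alt. nra.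
   + rewrite (Rmin_right ((s+t)/2)) by lra. rewrite Rmin_right. f_equal. unfold D. field.
     apply sqrt_le_1_alt. nra.
Qed.

Theorem theorem4p10 :
  (forall x y : C, S0 x -> S0 y ->
     s_metric S0 x y <= th (rho_S0 x y / 2) /\
     th (rho_S0 x y / 2) <= (PI / 2) * s_metric S0 x y) /\
  (* sharpness of the lower constant 1 *)
  (forall c : R, 1 < c ->
     exists x y : C, S0 x /\ S0 y /\ x <> y /\
       th (rho_S0 x y / 2) < c * s_metric S0 x y) /\
  (* sharpness of the upper constant pi/2 *)
  (forall c : R, c < PI / 2 ->
     exists x y : C, S0 x /\ S0 y /\ x <> y /\
       c * s_metric S0 x y < th (rho_S0 x y / 2)).
Proof.
 pose proof PI_gt3 as HPI.
 split; [|split].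
 - intros [a s] [b t] Hx Hy. unfold S0 in Hx, Hy; simpl in Hx, Hy.
   destruct (formula a s b t Hx Hy) as [Hmu [Hal [Hth [_ Hsm]]]].
   rewrite Hth, Hsm.
   set (D := (a - b) / 2) in *. set (al := (s - t) / 2) in *.
   set (mu := Rmin ((s+t)/2) (PI - (s+t)/2)) in *. set (P := 4 * exp a * exp b).
   assert (HP : 0 < P) by (unfold P; pose proof (exp_pos a); pose proof (exp_pos b); nra).
   destruct (key D al mu Hmu Hal) as [K1 K2].
   set (S := sh D ^2) in *. set (A := sin al ^2) in *. set (B := sin mu ^2) in *.
   assert (0 <= S) by apply pow2_ge_0. assert (0 <= A) by apply pow2_ge_0.
   assert (0 < B). { unfold B. assert (0 < sin mu) by (apply sin_gt_0; lra). nra. }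
   assert (0 <= D^2) by apply pow2_ge_0. assert (0 <= al^2) by apply pow2_ge_0.
   assert (0 < mu^2) by nra.
   split.
   + rewrite <- (Rmult_1_l (sqrt (P * (S + A)) / sqrt (P * (S + B)))).
     apply sr_le; try nra.
   + apply sr_le; [lra|nra|nra|nra|nra|].
     replace (P * (S + A) * (4 * (D ^ 2 + mu ^ 2))) with (4 * P * ((S + A) * (D^2 + mu^2))) by ring.
     replace ((PI / 2) ^ 2 * (4 * (D ^ 2 + al ^ 2) * (P * (S + B)))) with (4 * P * (PI^2/4 * ((D^2 + al^2) * (S + B)))) by field.
     apply Rmult_le_compat_l; nra.
 - intros c Hc.
   set (e := Rmin (1/2) ((c-1)/4)).
   assert (He : 0 < e <= 1/2 /\ e <= (c-1)/4).
   { unfold e. split; [split|]. apply Rmin_case; lra. apply Rmin_l. apply Rmin_r. }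
   exists (0, e), (1, e). assert (Hx : 0 < e < PI) by lra.
   split; [unfold S0; simpl; lra|]. split; [unfold S0; simpl; lra|].
   split. { intros Heq. injection Heq. lra. }
   destruct (formula 0 e 1 e Hx Hx) as [Hmu [Hal [_ [Hlt Hsm]]]].
   eapply Rlt_le_trans. exact Hlt. rewrite Hsm.
   replace (Rmin ((e + e) / 2) (PI - (e + e) / 2)) with e by (rewrite Rmin_left; lra).
   replace ((e - e)/2) with 0 by field. replace ((0 - 1)/2) with (-1/2) by field.
   rewrite <- (Rdiv_1_r 1) at 1. rewrite <- sqrt_1 at 1 2.
   apply sr_le; try lra; try nra.
 - intros c Hc.
   set (c0 := Rmax c 0).
   assert (Hc0 : 0 <= c0 < PI/2 /\ c <= c0).
   { unfold c0. split; [split|]. apply Rmax_r. apply Rmax_case; lra. apply Rmax_l. }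
   set (K := PI^2/4 - c0^2).
   assert (HK : 0 < K) by (unfold K; nra).
   set (d := Rmin 1 (K / (2 * (c0^2 + 1)))).
   assert (Hd : 0 < d <= 1 /\ d <= K / (2 * (c0^2+1))).
   { unfold d. split; [split|]. apply Rmin_case. lra. apply Rdiv_lt_0_compat; nra. apply Rmin_l. apply Rmin_r. }
   assert (Hpi : 0 < PI/2 < PI) by lra.
   exists (0, PI/2), (-2*d, PI/2).
   split; [unfold S0; simpl; lra|]. split; [unfold S0; simpl; lra|].
   split. { intros Heq. injection Heq. lra. }
   destruct (formula 0 (PI/2) (-2*d) (PI/2) Hpi Hpi) as [Hmu [Hal [Hth [Hlt Hsm]]]].
   rewrite Hth, Hsm.
   replace (Rmin ((PI / 2 + PI / 2) / 2) (PI - (PI / 2 + PI / 2) / 2)) with (PI/2) by (rewrite Rmin_left; lra).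
   replace ((PI/2 - PI/2)/2) with 0 by field. replace ((0 - -2*d)/2) with d by field.
   rewrite sin_0, sin_PI2.
   set (P := 4 * exp 0 * exp (-2*d)).
   assert (HP : 0 < P) by (unfold P; pose proof (exp_pos 0); pose proof (exp_pos (-2*d)); nra).
   pose proof (sh_ge_x d) as Hsh. assert (d <= sh d) by (apply Hsh; lra).
   set (S := sh d ^2).
   assert (HS : d^2 <= S) by (unfold S; nra).
   assert (Hs0 : 0 <= sqrt (4 * (d ^ 2 + 0 ^ 2)) / sqrt (4 * (d ^ 2 + (PI / 2) ^ 2))).
   { apply Rdiv_le_0_compat. apply sqrt_pos. apply sqrt_lt_R0. nra. }
   apply Rle_lt_trans with (c0 * (sqrt (4 * (d ^ 2 + 0 ^ 2)) / sqrt (4 * (d ^ 2 + (PI / 2) ^ 2)))).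
   { apply Rmult_le_compat_r; lra. }
   apply sr_lt; try nra.
   assert (Hdd : d^2 <= d) by nra.
   assert (Hcd : c0^2 * d^2 <= K / 2).
   { apply Rle_trans with ((c0^2+1) * d). nra.
     apply Rle_trans with ((c0^2+1) * (K / (2 * (c0^2+1)))). apply Rmult_le_compat_l; nra.
     right. field. nra. }
   assert (Hq : 0 < d^2 + PI^2/4 - c0^2 * d^2 - c0^2) by (unfold K in *; nra).
   assert (Hq2 : c0^2 * d^2 < S * (d^2 + PI^2/4 - c0^2 * d^2)).
   { apply Rlt_le_trans with (d^2 * (d^2 + PI^2/4 - c0^2 * d^2)).
     assert (0 < d^2) by nra. nra. apply Rmult_le_compat_r; nra. }
   replace (c0 ^ 2 * (4 * (d ^ 2 + 0 ^ 2) * (P * (S + 1 ^ 2)))) with (4 * P * (c0^2 * d^2 * (S + 1))) by ring.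
   replace (P * (S + 0 ^ 2) * (4 * (d ^ 2 + (PI / 2) ^ 2))) with (4 * P * (S * (d^2 + PI^2/4))) by field.
   apply Rmult_lt_compat_l. nra. nra.
Qed.
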